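(* Let $\mathsf{M}=(E,\mathcal{L})$ be a loopless matroid and $S\subseteq E$ any subset. Then there is a well-defined ring homomorphism $\rho_S:A^*(\mathsf{M}|_S)\rightarrow A^*(\mathsf{M})$ defined on generators by \[ \rho_S(D_G)=\sum_{G'\in\mathcal{L}^*,\ G\subseteq G'\subseteq G\cup (E\setminus S)}D_{G'} \] for every proper flat $G$ of $\mathsf{M}|_S$. In addition, if $S_1\subseteq S_2$ are nonempty flats, then $\rho_{S_1}=\rho_{S_1}\circ \rho_{S_2}$ (where $\rho_{S_1}$ on the right denotes the corresponding homomorphism $A^*(\mathsf{M}|_{S_1})\to A^*(\mathsf{M}|_{S_2})$ for the matroid $\mathsf{M}|_{S_2}$).
   Context: A matroid $\mathsf{M}=(E,\mathcal{L})$ consists of a finite ground set $E$ and a collection $\mathcal{L}\subseteq 2^E$ of flats such that (1) the intersection of two flats is a flat, and (2) for every flat $F$, every element of $E\setminus F$ lies in exactly one flat minimal among flats strictly containing $F$. It is loopless if $\emptyset\in\mathcal{L}$. Write $\mathcal{L}^*=\mathcal{L}\setminus\{\emptyset,E\}$ for proper flats. The restriction $\mathsf{M}|_S$ is the matroid on ground set $S$ with flats $\{F\cap S\mid F\in\mathcal{L}\}$. For a loopless matroid $\mathsf{N}=(E',\mathcal{L}')$, the Chow ring is $A^*(\mathsf{N})=\mathbb{Z}[X_F\mid F\in\mathcal{L}'^*]/(\mathcal{I}+\mathcal{J})$, where $\mathcal{L}'^*=\mathcal{L}'\setminus\{\emptyset,E'\}$, $\mathcal{I}$ is generated by $X_{F_1}X_{F_2}$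 for incomparable $F_1,F_2$, and $\mathcal{J}$ by $\sum_{F\in\mathcal{L}'^*,\,e\in F}X_F-\sum_{F\in\mathcal{L}'^*,\,f\in F}X_F$ for $e,f\in E'$; $D_F$ denotes the class of $X_F$. *)

(* Defs.v *)
From HB Require Import structures.
From mathcomp Require Import all_boot all_order all_algebra.
From mathcomp Require Import mpoly.

Set Implicit Arguments.
Unset Strict Implicit.
Unset Printing Implicit Defensive.

Import GRing.Theory.
Local Open Scope ring_scope.

Section Matroid.
Variable T : finType.
Implicit Types (E S F G : {set T}) (L : {set {set T}}).

Definition covers L F G : Prop :=
  G \in L /\ F \proper G /\ (forall G', G' \in L -> F \proper G' -> ~ (G' \proper G)).

Definition is_matroid E L : Prop :=
  (forall F, F \in L -> F \subset E) /\
  (forall F1 F2, F1 \in L -> F2 \in L -> F1 :&: F2 \in L) /\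
  (forall F, F \in L -> forall e, e \in E -> e \notin F ->
     exists! G, covers L F G /\ e \in G).

Definition loopless L : Prop := set0 \in L.

(* flats of the restriction M|_S (its ground set is S) *)
Definition restr_flats L S : {set {set T}} := [set F :&: S | F in L].

Definition pflats E L : {set {set T}} := [set F in L | (F != set0) && (F != E)].

(* The polynomial ring Z[X_F | F in L^*]; the variable with index
   i : 'I_#|pflats E L| stands for the proper flat [enum_val i]. *)
Definition chowpoly E L := {mpoly int[#|pflats E L|]}.

Definition flat_of E L (i : 'I_#|pflats E L|) : {set T} := enum_val i.

Definition lin_form E L (e : T) : chowpoly E L :=
  \sum_(i < #|pflats E L| | e \in flat_of i) 'X_i.

Definition chow_gen E L (g : chowpoly E L) : Prop :=
  (exists i j : 'I_#|pflats E L|,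
      ~~ (flat_of i \subset flat_of j) /\ ~~ (flat_of j \subset flat_of i) /\
      g = 'X_i * 'X_j) \/
  (exists e f, e \in E /\ f \in E /\ g = lin_form E L e - lin_form E L f).

Definition chow_ideal E L (p : chowpoly E L) : Prop :=
  exists s : seq (chowpoly E L * chowpoly E L),
    (forall x, x \in s -> chow_gen x.2) /\ p = \sum_(x <- s) x.1 * x.2.

(* two polynomials have the same class in A^*(E,L) *)
Definition chow_eq E L (p q : chowpoly E L) : Prop := chow_ideal (p - q).

Definition rho_img E L S LS (i : 'I_#|pflats S LS|) : chowpoly E L :=
  \sum_(j < #|pflats E L| |
        (flat_of i \subset flat_of j) && (flat_of j \subset flat_of i :|: (E :\: S)))
    'X_j.

Definition rho_poly E L S LS (p : chowpoly S LS) : chowpoly E L :=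
  comp_mpoly [tuple @rho_img E L S LS i | i < #|pflats S LS|] p.

End Matroid.

Arguments flat_of {T E L} i.
Arguments chow_gen {T E L} g.
Arguments chow_ideal {T E L} p.
Arguments chow_eq {T E L} p q.
Arguments rho_img {T} E L S LS i.
Arguments rho_poly {T} E L S LS p.

(* Main.v *)
Require Import Defs.
From HB Require Import structures.
From mathcomp Require Import all_boot all_order all_algebra.
From mathcomp Require Import mpoly.
Set Implicit Arguments. Unset Strict Implicit. Unset Printing Implicit Defensive.
Import GRing.Theory.
Local Open Scope ring_scope.

Lemma comp_mpolyA (n k l : nat) (R : comRingType) (lr : n.-tuple {mpoly R[k]})
   (lq : k.-tuple {mpoly R[l]}) (p : {mpoly R[n]}) :
  comp_mpoly lq (comp_mpoly lr p) = comp_mpoly [tuple comp_mpoly lq (tnth lr i) | i < n] p.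
Proof.
rewrite (comp_mpolyE p lr) (comp_mpolyE p) raddf_sum /=.
apply: eq_bigr => m _; rewrite comp_mpolyZ rmorph_prod /=; congr (_ *: _).
by apply: eq_bigr => i _; rewrite rmorphXn tnth_mktuple.
Qed.

Section S.
Variable T : finType.
Implicit Types (E S A B : {set T}) (L : {set {set T}}).

Lemma cond_restr A B E S : A \subset S -> B \subset E ->
  (A \subset B) && (B \subset A :|: (E :\: S)) = (A == B :&: S).
Proof.
move=> /subsetP AS /subsetP BE; apply/idP/idP.
- case/andP=> /subsetP AB /subsetP BA; apply/eqP/setP=> x; rewrite inE.
  apply/idP/andP => [xA|[xB xS]]; first by rewrite AB // AS.
  by move: (BA x xB); rewrite !inE xS /= orbF.
- move/eqP=> ->; apply/andP; split; first exact: subsetIl.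
  apply/subsetP=> x xB; rewrite !inE xB BE // andbT.
  by case: (x \in S).
Qed.

Lemma flat_ofP E L (i : 'I_#|pflats E L|) : flat_of i \in pflats E L.
Proof. exact: enum_valP. Qed.

Lemma flat_of_inj E L : injective (@flat_of T E L).
Proof. exact: enum_val_inj. Qed.

Lemma sum_flat_eq E L (R : nmodType) (F : {set T}) (x : R) :
  \sum_(i < #|pflats E L| | flat_of i == F) x = if F \in pflats E L then x else 0.
Proof.
case: ifP => HF.
- pose i0 := enum_rank_in HF F.
  have Hi0 : flat_of i0 = F by rewrite /flat_of /i0 enum_rankK_in.
  rewrite (big_pred1 i0) // => i /=; apply/eqP/eqP => [Hi|->//].
  by apply: flat_of_inj; rewrite Hi0.
- rewrite big_pred0 // => i; apply/negbTE/eqP => Hi.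
  by move: (flat_ofP i); rewrite Hi HF.
Qed.


Section Ideal.
Variables (E : {set T}) (L : {set {set T}}).
Local Notation P := (chowpoly E L).

Lemma ideal0 : @chow_ideal T E L 0.
Proof. by exists [::]; split => //; rewrite big_nil. Qed.

Lemma idealD (p q : P) : chow_ideal p -> chow_ideal q -> chow_ideal (p + q).
Proof.
move=> [s1 [H1 ->]] [s2 [H2 ->]]; exists (s1 ++ s2); split; last by rewrite big_cat.
by move=> x; rewrite mem_cat => /orP[/H1|/H2].
Qed.

Lemma idealM (r p : P) : chow_ideal p -> chow_ideal (r * p).
Proof.
move=> [s [H ->]]; exists [seq (r * x.1, x.2) | x <- s]; split.
  by move=> x /mapP[y /H Hy ->].
by rewrite big_map mulr_sumr; apply: eq_bigr => x _; rewrite mulrA.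
Qed.

Lemma ideal_gen (g : P) : chow_gen g -> chow_ideal g.
Proof.
move=> Hg; exists [:: (1, g)]; split; first by move=> x; rewrite inE => /eqP ->.
by rewrite big_cons big_nil mul1r addr0.
Qed.

Lemma ideal_sum (I : Type) (r : seq I) (Pr : pred I) (F : I -> P) :
  (forall i, Pr i -> chow_ideal (F i)) -> chow_ideal (\sum_(i <- r | Pr i) F i).
Proof.
move=> H; elim: r => [|a r IH]; first by rewrite big_nil; exact: ideal0.
rewrite big_cons; case: ifP => // Pa; apply: idealD => //; exact: H.
Qed.

End Ideal.

Lemma rho_polyM (E S : {set T}) (L LS : {set {set T}}) (p q : chowpoly S LS) :
  rho_poly E L S LS (p * q) = rho_poly E L S LS p * rho_poly E L S LS q.
Proof. rewrite /rho_poly. exact: rmorphM. Qed.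
Lemma ideal_rho (E S : {set T}) (L LS : {set {set T}}) :
  (forall g : chowpoly S LS, chow_gen g -> chow_ideal (rho_poly E L S LS g)) ->
  forall p, chow_ideal p -> chow_ideal (rho_poly E L S LS p).
Proof.
move=> Hg p [s [Hs ->]]; rewrite big_seq /rho_poly raddf_sum; apply: ideal_sum => x xs.
change (chow_ideal (rho_poly E L S LS (x.1 * x.2))); rewrite rho_polyM. apply: idealM; apply: Hg; exact: Hs.
Qed.

Lemma rho_polyX (E S : {set T}) (L LS : {set {set T}}) i :
  rho_poly E L S LS 'X_i = rho_img E L S LS i.
Proof. by rewrite /rho_poly comp_mpolyXU -tnth_nth tnth_mktuple. Qed.


Lemma restr_sub L S F : F \in restr_flats L S -> F \subset S.
Proof. by case/imsetP=> G _ ->; exact: subsetIr. Qed.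

Lemma restr_in L S F : F \in L -> F :&: S \in restr_flats L S.
Proof. by move=> HF; apply: imset_f. Qed.

Lemma pflats_L E L F : F \in pflats E L -> F \in L.
Proof. by rewrite inE => /andP[]. Qed.

Lemma flat_sub E L (HL : forall F, F \in L -> F \subset E) (j : 'I_#|pflats E L|) :
  flat_of j \subset E.
Proof. exact/HL/pflats_L/flat_ofP. Qed.

Lemma flat_restr_sub L S (i : 'I_#|pflats S (restr_flats L S)|) : flat_of i \subset S.
Proof. exact/restr_sub/pflats_L/flat_ofP. Qed.

Lemma rho_lin E L S e : (forall F, F \in L -> F \subset E) -> e \in S ->
  rho_poly E L S (restr_flats L S) (lin_form S (restr_flats L S) e) =
  lin_form E L e - \sum_(j < #|pflats E L| | S \subset flat_of j) 'X_j.
Proof.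
move=> HL eS.
rewrite /lin_form /rho_poly raddf_sum /=.
transitivity (\sum_(i < #|pflats S (restr_flats L S)| | e \in flat_of i)
   rho_img E L S (restr_flats L S) i).
  by apply: eq_bigr => i _; exact: rho_polyX.
rewrite /rho_img (exchange_big_dep xpredT) //=.
rewrite big_mkcond [X in _ = X - _]big_mkcond [X in _ = _ - X]big_mkcond -sumrB.
apply: eq_bigr => j _.
rewrite (eq_bigl (fun i => (flat_of i == flat_of j :&: S) && (e \in flat_of j))); last first.
  move=> i /=; rewrite cond_restr ?flat_restr_sub ?flat_sub //.
  by case: eqP => [->|_]; rewrite ?andbF // inE eS andbT andbC.
rewrite big_mkcondr /= sum_flat_eq.
have Hin : flat_of j :&: S \in restr_flats L S.
  exact/restr_in/pflats_L/flat_ofP.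
rewrite [_ \in pflats _ _]inE Hin /=.
case Sj: (S \subset flat_of j).
  have -> : flat_of j :&: S = S by apply/setIidPr.
  by rewrite eqxx andbF /= (subsetP Sj) // subrr.
case ej: (e \in flat_of j); last by rewrite if_same subr0.
have -> : flat_of j :&: S != set0 by apply/set0Pn; exists e; rewrite inE ej eS.
have -> // : flat_of j :&: S != S.
  by apply/negP => /eqP h; move: Sj; rewrite -h subsetIl.
by rewrite subr0.
Qed.


Lemma rho_poly_sum E L S LS (Pr : pred 'I_#|pflats S LS|) :
  rho_poly E L S LS (\sum_(i | Pr i) 'X_i) = \sum_(i | Pr i) rho_img E L S LS i.
Proof.
rewrite /rho_poly raddf_sum /=; apply: eq_bigr => i _; exact: rho_polyX.
Qed.

Lemma rho_comp_img E L S1 S2 : (forall F, F \in L -> F \subset E) -> S1 \subset S2 ->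
  forall i, rho_poly E L S2 (restr_flats L S2)
     (rho_img S2 (restr_flats L S2) S1 (restr_flats L S1) i)
   = rho_img E L S1 (restr_flats L S1) i.
Proof.
move=> HL S1S2 i.
rewrite {1}/rho_img rho_poly_sum /rho_img (exchange_big_dep xpredT) //=.
rewrite [RHS]big_mkcond; apply: eq_bigr => j _.
rewrite (eq_bigl (fun k => (flat_of k == flat_of j :&: S2) &&
                           (flat_of i == flat_of j :&: S1))); last first.
  move=> k /=; rewrite !cond_restr ?flat_restr_sub ?flat_sub //.
  apply/andP/andP => [[/eqP-> /eqP->]|[/eqP-> /eqP->]]; split => //;
    by rewrite -?setIA ?(setIidPr S1S2).
rewrite big_mkcondr /= sum_flat_eq cond_restr ?flat_restr_sub ?flat_sub //.
case: eqP => [Hij|_]; last by rewrite if_same.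
have := flat_ofP i; rewrite inE => /and3P[_ ne0 neS1].
rewrite inE restr_in ?pflats_L ?flat_ofP //=.
have -> : flat_of j :&: S2 != set0.
  apply: contraNneq ne0 => h; rewrite Hij -subset0 -h; exact: setIS.
have -> // : flat_of j :&: S2 != S2.
apply: contraNneq neS1 => h; rewrite Hij; apply/eqP/setIidPr.
by apply: subset_trans S1S2 _; apply/setIidPr.
exact/pflats_L/flat_ofP.
Qed.

Lemma rho_polyB (E S : {set T}) (L LS : {set {set T}}) (p q : chowpoly S LS) :
  rho_poly E L S LS (p - q) = rho_poly E L S LS p - rho_poly E L S LS q.
Proof. exact: comp_mpolyB. Qed.

End S.

Theorem proposition3p6 (T : finType) (E : {set T}) (L : {set {set T}}) :
  is_matroid E L -> loopless L ->
  (* rho_S descends to a well-defined ring map A^*(M|_S) -> A^*(M) *)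
  (forall S : {set T}, S \subset E ->
     forall p q : chowpoly S (restr_flats L S),
       chow_eq p q ->
       chow_eq (rho_poly E L S (restr_flats L S) p)
               (rho_poly E L S (restr_flats L S) q)) /\
  (* compatibility rho_{S1} = rho_{S2} o rho_{S1} for nonempty flats S1 <= S2 *)
  (forall S1 S2 : {set T},
     S1 \in L -> S2 \in L -> S1 != set0 -> S2 != set0 -> S1 \subset S2 ->
     forall p : chowpoly S1 (restr_flats L S1),
       chow_eq (rho_poly E L S1 (restr_flats L S1) p)
               (rho_poly E L S2 (restr_flats L S2)
                  (rho_poly S2 (restr_flats L S2) S1 (restr_flats L S1) p))).
Proof.
move=> [HL _] _; split.
- move=> S SE p q; rewrite /chow_eq -rho_polyB => H.
  apply: ideal_rho H => g [[a [b [nab [nba ->]]]] | [e [f [eS [fS ->]]]]].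
  + rewrite rho_polyM !rho_polyX /rho_img big_distrlr /=.
    apply: ideal_sum => j cj; apply: ideal_sum => k ck; apply: ideal_gen; left.
    rewrite !cond_restr ?flat_restr_sub ?flat_sub // in cj ck.
    exists j, k; split; last split => //; [move: nab | move: nba]; apply: contra => sub;
      rewrite (eqP cj) (eqP ck); exact: setSI.
  + rewrite rho_polyB !rho_lin // opprB addrA subrK; apply: ideal_gen; right.
    by exists e, f; rewrite !(subsetP SE).
- move=> S1 S2 S1L S2L _ _ S1S2 p.
  have E1 : forall q, rho_poly E L S2 (restr_flats L S2)
                 (rho_poly S2 (restr_flats L S2) S1 (restr_flats L S1) q)
               = rho_poly E L S1 (restr_flats L S1) q.
    move=> q; rewrite /rho_poly comp_mpolyA; congr comp_mpoly.
    apply: eq_mktuple => i; rewrite tnth_mktuple; exact: rho_comp_img.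
  by rewrite E1 /chow_eq subrr; exact: ideal0.
Qed.
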